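(* For every positive integer $n$, the number of edges of $OD(\mathbb{Z}_n)$ is $$|E(OD(\mathbb{Z}_n))|=\frac12\sum_{m\mid n}\Big(m+\sum_{\lambda\mid\frac{n}{m}}\phi(\lambda m)-2\phi(m)\Big)\phi(m),$$ where $\phi$ is Euler's totient function and sums run over positive divisors.
   Context: $\mathbb{Z}_n$ is the additive cyclic group of integers modulo $n$. For a finite group $G$, $o(x)$ denotes the order of $x\in G$. The order-divisor graph $OD(G)$ is the simple undirected graph with vertex set $G$, in which two distinct vertices $x,y$ are adjacent if and only if $o(x)\neq o(y)$ and either $o(x)\mid o(y)$ or $o(y)\mid o(x)$. *)

(* Defs.v *)
From mathcomp Require Import all_boot all_order all_algebra all_fingroup.
Set Implicit Arguments. Unset Strict Implicit. Unset Printing Implicit Defensive.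

(* Z_n for n = k.+1 is the additive cyclic group 'I_k.+1 (zmodp's canonical
   finGroupType on 'I_k.+1 is addition mod k.+1); #[x] is the element order. *)

Definition od_adj (gT : finGroupType) (x y : gT) : bool :=
  [&& x != y, #[x]%g != #[y]%g & (#[x]%g %| #[y]%g) || (#[y]%g %| #[x]%g)].

Definition od_edges (gT : finGroupType) : {set {set gT}} :=
  [set e : {set gT} | [exists x : gT, exists y : gT,
      (e == [set x; y]) && od_adj x y]].

(* Main.v *)
Require Import Defs.
From mathcomp Require Import all_boot all_order all_algebra all_fingroup all_solvable.
From mathcomp Require Import ring.
Import GRing.Theory.

Lemma sum_divisorsE n (F : nat -> nat) : 0 < n ->
  \sum_(d <- divisors n) F d = \sum_(d < n.+1 | d %| n) F d.
Proof.
move=> n0; rewrite -(big_mkord (fun d => d %| n)) -[in RHS]big_filter.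
suff -> : divisors n = [seq d <- index_iota 0 n.+1 | d %| n] by [].
apply: (irr_sorted_eq (leT := ltn)).
- exact: ltn_trans.
- by move=> x /=; rewrite ltnn.
- exact: sorted_divisors_ltn.
- by apply: sorted_filter; [exact: ltn_trans|exact: iota_ltn_sorted].
move=> d; rewrite mem_filter -dvdn_divisors // mem_index_iota /=.
case dn: (d %| n) => //=; by rewrite ltnS dvdn_leq.
Qed.

Lemma sum_totient_div m : 0 < m -> \sum_(d <- divisors m) totient d = m.
Proof. by move=> m0; rewrite sum_divisorsE // sum_totient_dvd. Qed.

Lemma sum_div_sub n m (F : nat -> nat) : 0 < n -> m %| n ->
  \sum_(d <- divisors n | d %| m) F d = \sum_(d <- divisors m) F d.
Proof.
move=> n0 mn; have m0 : 0 < m by apply: dvdn_gt0 mn.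
rewrite -big_filter; apply: perm_big; apply: uniq_perm.
- by rewrite filter_uniq // divisors_uniq.
- exact: divisors_uniq.
move=> d; rewrite mem_filter -!dvdn_divisors //.
by case dm: (d %| m); rewrite //= (dvdn_trans dm mn).
Qed.

Lemma sum_div_sup n m (F : nat -> nat) : 0 < n -> m %| n ->
  \sum_(d <- divisors n | m %| d) F d = \sum_(l <- divisors (n %/ m)) F (l * m).
Proof.
move=> n0 mn; have m0 : 0 < m by apply: dvdn_gt0 mn.
have nm0 : 0 < n %/ m by rewrite divn_gt0 // dvdn_leq.
rewrite -big_filter -(big_map (fun l => l * m) xpredT); apply: perm_big; apply: uniq_perm.
- by rewrite filter_uniq // divisors_uniq.
- rewrite map_inj_uniq ?divisors_uniq // => a b /eqP; rewrite eqn_pmul2r // => /eqP //.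
move=> d; rewrite mem_filter -!dvdn_divisors //; apply/andP/mapP.
  case=> /dvdnP [l ->] lmn; exists l; rewrite // -dvdn_divisors //.
  by rewrite dvdn_divRL.
case=> l; rewrite -dvdn_divisors // => ldiv ->; split; first exact: dvdn_mull.
by rewrite -(divnK mn) dvdn_pmul2r.
Qed.

Lemma card_order_Zp k d : d %| k.+1 ->
  #|[set x : 'I_k.+1 | #[x]%g == d]| = totient d.
Proof.
move=> dn.
set a : 'I_k.+1 := Zp1.
have oa : #[a]%g = k.+1 by apply: order_Zp1.
set b := (a ^+ (k.+1 %/ d))%g.
have d0 : 0 < d by apply: dvdn_gt0 dn.
have ob : #[b]%g = d.
  rewrite /b orderXdiv oa ?dvdn_div //.
  by rewrite -{1}(divnK dn) mulKn // divn_gt0 // dvdn_leq.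
rewrite -ob totient_gen; apply: eq_card => x; rewrite !inE.
apply/idP/idP => [/eqP oxb | /generator_order ->//].
rewrite /generator eq_sym (eq_subG_cyclic (G := <[a]>)) ?cycle_cyclic //.
- by rewrite -!orderE oxb.
- move: (Zp_cycle k) => /setP E; apply/subsetP => y _; by rewrite /a -E inE.
- by rewrite cycle_subG /b groupX // cycle_id.
Qed.

Lemma order_dvd_Zp k (x : 'I_k.+1) : #[x]%g %| k.+1.
Proof. by have := order_dvdG (in_setT x); rewrite cardsT card_ord. Qed.

Lemma sum_by_order k (F : nat -> nat) :
  \sum_(y : 'I_k.+1) F #[y]%g = \sum_(d <- divisors k.+1) totient d * F d.
Proof.
transitivity (\sum_(y : 'I_k.+1) \sum_(d <- divisors k.+1)
                 (if #[y]%g == d then F d else 0)).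
  apply: eq_bigr => y _.
  rewrite (bigD1_seq #[y]%g) ?divisors_uniq -?dvdn_divisors ?order_dvd_Zp //=.
  rewrite eqxx big1 ?addn0 // => d /negPf; by rewrite eq_sym => ->.
rewrite exchange_big /=; rewrite big_seq [RHS]big_seq; apply: eq_bigr => d.
rewrite -dvdn_divisors // => dn.
rewrite -big_mkcond /= -(@card_order_Zp k d dn) -sum1dep_card big_distrl /=.
by apply: eq_bigr => y _; rewrite mul1n.
Qed.

Lemma od_adj_sym (gT : finGroupType) (x y : gT) : od_adj x y = od_adj y x.
Proof. by rewrite /od_adj eq_sym [#[y]%g == _]eq_sym orbC. Qed.

Lemma set2_eqP (T : finType) (a b x y : T) : a != b ->
  ([set a; b] == [set x; y]) = ((a, b) == (x, y)) || ((a, b) == (y, x)).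
Proof.
move=> ab; apply/idP/idP.
  move/eqP=> E.
  have : a \in [set x; y] by rewrite -E !inE eqxx.
  have : b \in [set x; y] by rewrite -E !inE eqxx orbT.
  rewrite !inE => /orP[]/eqP Eb /orP[]/eqP Ea; subst; rewrite ?eqxx ?orbT //.
  1,2: by rewrite eqxx in ab.
case/orP=> /eqP [-> ->] //; by rewrite setUC.

Qed.

Lemma edges_double (gT : finGroupType) :
  2 * #|od_edges gT| = \sum_(x : gT) \sum_(y : gT) (od_adj x y : nat).
Proof.
rewrite pair_big /= -big_mkcond /=.
rewrite (partition_big (fun p : gT * gT => [set p.1; p.2]) (mem (od_edges gT))) /=;
  last first.
  case=> x y /= h; rewrite inE; apply/existsP; exists x; apply/existsP; exists y.
  by rewrite eqxx.
rewrite -sum1_card big_distrr /=; apply: eq_bigr => e.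
rewrite inE => /existsP [x /existsP [y /andP [/eqP -> axy]]].
have xy : x != y by case/and3P: axy.
rewrite muln1 (sum1dep_card) /=.
have xy2 : ((x, y) != (y, x)) by apply/eqP => [[]] E; rewrite E eqxx in xy.
rewrite -[LHS]/(true.+1) -xy2 -cards2.
apply: eq_card => [[a b]]; rewrite !inE /=.
case ab: (od_adj a b) => /=.
  by rewrite set2_eqP //; case/and3P: ab.
apply/negbTE/negP => /orP[]/eqP [Ea Eb]; subst; move: ab.
  by rewrite axy.
by rewrite od_adj_sym axy.
Qed.

Definition gadj (m d : nat) : bool := (d != m) && ((d %| m) || (m %| d)).

Lemma key_arith n m : 0 < n -> m %| n ->
  \sum_(d <- divisors n) totient d * gadj m d + 2 * totient m =
  m + \sum_(l <- divisors (n %/ m)) totient (l * m).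
Proof.
move=> n0 mn; have m0 : 0 < m by apply: dvdn_gt0 mn.
rewrite -(@sum_div_sup n m totient n0 mn) -[X in _ = X + _](@sum_totient_div m m0).
rewrite -(@sum_div_sub n m totient n0 mn).
have -> : 2 * totient m = \sum_(d <- divisors n) (d == m) * (2 * totient d).
  rewrite (bigD1_seq m) ?divisors_uniq -?dvdn_divisors // eqxx mul1n big1.
    by rewrite [RHS]addn0.
  by move=> d /negPf ->.
rewrite !(big_mkcond (fun d => _ %| _)) -!big_split /=; apply: eq_bigr => d _.
rewrite /gadj; have [->|dm] := eqVneq d m.
  by rewrite dvdnn /= muln0 mul1n add0n mul2n -addnn.
rewrite /= addn0.
case dvm: (d %| m); case mvd: (m %| d) => /=; rewrite ?muln1 ?muln0 ?addn0 //.
by move: dm; rewrite eqn_dvd dvm mvd.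
Qed.

Lemma od_adj_gadj k (x y : 'I_k.+1) : od_adj x y = gadj #[x]%g #[y]%g.
Proof.
rewrite /od_adj /gadj eq_sym orbC; have [->|//] := eqVneq x y.
  by rewrite eqxx.
by move=> _; rewrite eq_sym.
Qed.

Lemma edges_nat k :
  2 * #|od_edges 'I_k.+1| = \sum_(m <- divisors k.+1)
     totient m * \sum_(d <- divisors k.+1) totient d * gadj m d.
Proof.
rewrite edges_double -(sum_by_order k (fun m => \sum_(d <- divisors k.+1) totient d * gadj m d)).
apply: eq_bigr => x _; rewrite -(sum_by_order k (fun d => gadj #[x]%g d)).
by apply: eq_bigr => y _; rewrite od_adj_gadj.
Qed.

Import GRing.Theory.
Local Open Scope ring_scope.

Theorem mainTheorem15 (k : nat) :
  let n := k.+1 in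
  (#|od_edges 'I_n|)%:R =
    2^-1 * \sum_(m <- divisors n)
       ((m%:R + \sum_(l <- divisors (n %/ m)) (totient (l * m))%:R
         - 2 * (totient m)%:R) * (totient m)%:R) :> rat.
Proof.
move=> n.
have -> : \sum_(m <- divisors n)
       ((m%:R + \sum_(l <- divisors (n %/ m)) (totient (l * m))%:R
         - 2 * (totient m)%:R) * (totient m)%:R) =
   (\sum_(m <- divisors n) totient m * \sum_(d <- divisors n) totient d * gadj m d)%N%:R :> rat.
  rewrite natr_sum big_seq [RHS]big_seq; apply: eq_bigr => m.
  rewrite -dvdn_divisors // => mn.
  have := @key_arith n m (ltn0Sn k) mn => /(congr1 (fun x => x%:R : rat)).
  rewrite !natrD natr_sum natrM -!natr_sum => H.
  rewrite -H; ring.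
rewrite -edges_nat natrM mulrA mulVf ?mul1r //.
Qed.
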